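(* Let $D\subset\mathbb{C}^n$ be a domain containing $o$, let $\Phi^D_{o,\max}$ be a global Zhou weight related to $|f_0|^2e^{-2\varphi_0}$ on $D$, and let $\psi$ be a negative plurisubharmonic function on $D$. Then $\psi\le\sigma(\psi,\Phi^D_{o,\max})\,\Phi^D_{o,\max}$ on all of $D$.
   Context: Let $o$ be the origin; ''near $o$'' means on some neighborhood of $o$; ''integrable near $o$'' means Lebesgue integrable on some neighborhood of $o$. Let $f_0=(f_{0,1},\dots,f_{0,m})$ be holomorphic near $o$, $|f_0|^2=\sum|f_{0,j}|^2$, $\varphi_0$ plurisubharmonic near $o$ with $|f_0|^2e^{-2\varphi_0}$ integrable near $o$. A negative plurisubharmonic function $\Phi^D_{o,\max}$ on $D$ is a global Zhou weight related to $|f_0|^2e^{-2\varphi_0}$ on $D$ if: (1) $|f_0|^2e^{-2\varphi_0}|z|^{2N_0}e^{-2\Phi^D_{o,\max}}$ is integrable near $o$ for some $N_0$; (2) $|f_0|^2e^{-2\varphi_0-2\Phi^D_{o,\max}}$ is not integrable near $o$; (3) every negative plurisubharmonic $\tilde\varphi$ on $D$ with $\tilde\varphi\ge\Phi^D_{o,\max}$ on $D$ and $|f_0|^2e^{-2\varphi_0-2\tilde\varphi}$ not integrable near $o$ equals $\Phi^D_{o,\max}$ on $D$. $\sigma(\psi,\Phi):=\sup\{b\ge0:\psi\le b\Phi+O(1)\text{ near }o\}$ (with the convention $0\cdot\Phi:=0$ if $\sigma=0$). *)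

(* Defs.v *)
From HB Require Import structures.
From mathcomp Require Import all_boot all_order all_algebra.
From mathcomp Require Import all_classical all_reals all_analysis.
From mathcomp Require Import complex.
Import Order.TTheory GRing.Theory Num.Theory.
Import numFieldTopology.Exports numFieldNormedType.Exports.

Set Implicit Arguments.
Unset Strict Implicit.
Unset Printing Implicit Defensive.

Local Open Scope classical_set_scope.
Local Open Scope ring_scope.

(* The complex field over a real field R, viewed as a numClosedFieldType
   (so that it carries its canonical norm/topology). *)
Definition CC (R : realType) : numClosedFieldType := (R[i] : numClosedFieldType).

(* C^n as row vectors (with the product topology = Euclidean topology). *)
Definition Cn (R : realType) (n : nat) := 'rV[CC R]_n.

Definition abs2 (R : realType) (w : CC R) : R := (@complex.Re R w) ^+ 2 + (@complex.Im R w) ^+ 2.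
Definition sqnorm (R : realType) (n : nat) (z : Cn R n) : R :=
  \sum_(i < n) abs2 (z ord0 i).

Definition expi (R : realType) (t : R) : CC R := (@complex.Complex R (cos t) (sin t)).

Definition zpt (R : realType) (n : nat) (x : nat -> R) : Cn R n :=
  \row_(i < n) (@complex.Complex R (x i.*2) (x i.*2.+1) : CC R).

Local Open Scope ereal_scope.

(* k-fold iterated Lebesgue integral over R^k (coordinates 0..k-1) of a
   function of the real coordinates; for nonnegative measurable integrands this
   is the Lebesgue integral over R^k (Tonelli). *)
Fixpoint iter_int (R : realType) (k : nat) (g : (nat -> R) -> \bar R) : \bar R :=
  match k with
  | 0 => g (fun _ => 0%R)
  | k'.+1 => iter_int k' (fun x =>
       \int[@lebesgue_measure R]_(t in [set: R])
          g (fun j => if j == k' then t else x j))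
  end.

Definition int_Cn (R : realType) (n : nat) (F : Cn R n -> \bar R) : \bar R :=
  iter_int (n.*2) (fun x => F (zpt n x)).

Definition integrable_near_o (R : realType) (n : nat) (F : Cn R n -> \bar R) : Prop :=
  exists r : R, (0 < r)%R /\
    int_Cn (fun z => if (sqnorm z < r ^+ 2)%R then F z else 0) < +oo.

Definition holomorphic_on (R : realType) (n : nat) (U : set (Cn R n))
    (f : Cn R n -> CC R) : Prop :=
  forall z, U z -> differentiable f z.

Definition psh_on (R : realType) (n : nat) (D : set (Cn R n))
    (u : Cn R n -> \bar R) : Prop :=
  open D /\
  (forall z, D z -> u z < +oo) /\
  (forall z, D z -> forall c : R, u z < c%:E -> \forall w \near z, u w < c%:E) /\
  (forall a b : Cn R n,
      (forall l : CC R, `|l| <= 1 -> D (a + l *: b))%R ->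
      u a <= ((2 * pi)^-1)%:E *
             \int[@lebesgue_measure R]_(t in `[0%R, (2 * pi)%R])
                 u (a + expi t *: b)%R) /\
  (forall z, D z -> exists w, connected_component D z w /\ u w != -oo).

Definition neg_psh_on (R : realType) (n : nat) (D : set (Cn R n))
    (u : Cn R n -> \bar R) : Prop :=
  psh_on D u /\ (forall z, D z -> u z < 0).

Definition domain_with_o (R : realType) (n : nat) (D : set (Cn R n)) : Prop :=
  open D /\ connected D /\ D 0%R.

Definition weight_f0 (R : realType) (n m : nat) (f0 : 'I_m -> Cn R n -> CC R)
    (phi0 : Cn R n -> \bar R) (z : Cn R n) : \bar R :=
  (\sum_(j < m) abs2 (f0 j z))%R%:E * expeR (- (2%:E * phi0 z)).

Definition global_Zhou_weight (R : realType) (n m : nat) (D : set (Cn R n))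
    (f0 : 'I_m -> Cn R n -> CC R) (phi0 : Cn R n -> \bar R)
    (Phi : Cn R n -> \bar R) : Prop :=
  neg_psh_on D Phi /\
  (exists N0 : nat, integrable_near_o (fun z =>
       weight_f0 f0 phi0 z * ((sqnorm z) ^+ N0)%:E * expeR (- (2%:E * Phi z)))) /\
  ~ integrable_near_o (fun z => weight_f0 f0 phi0 z * expeR (- (2%:E * Phi z))) /\
  (forall phit : Cn R n -> \bar R,
      neg_psh_on D phit ->
      (forall z, D z -> Phi z <= phit z) ->
      ~ integrable_near_o (fun z => weight_f0 f0 phi0 z * expeR (- (2%:E * phit z))) ->
      forall z, D z -> phit z = Phi z).

(* sigma(psi, Phi) = sup { b >= 0 : psi <= b Phi + O(1) near o }  (in \bar R);
   with b = 0 the term b * Phi is 0 (mathcomp: 0 * -oo = 0). *)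
Definition sigma_rel (R : realType) (n : nat) (D : set (Cn R n))
    (psi Phi : Cn R n -> \bar R) : \bar R :=
  ereal_sup [set b%:E | b in [set b : R | (0 <= b)%R /\
     exists r : R, (0 < r)%R /\ exists c : R,
       forall z, D z -> (sqnorm z < r ^+ 2)%R -> psi z <= b%:E * Phi z + c%:E]].

(* Main.v *)
Require Import Defs.
From HB Require Import structures.
From mathcomp Require Import all_boot all_order all_algebra.
From mathcomp Require Import all_classical all_reals all_analysis.
From mathcomp Require Import complex.
From mathcomp Require Import lra.
Import Order.TTheory GRing.Theory Num.Theory.
Import numFieldTopology.Exports numFieldNormedType.Exports.
Local Open Scope classical_set_scope.
Local Open Scope ring_scope.
Local Open Scope ereal_scope.

Section IntLemmas.
Context d (T : measurableType d) (R : realType).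
Variable mu : {measure set T -> \bar R}.
Import HBNNSimple.

Lemma nnint_mono (D : set T) (f g : T -> \bar R) :
  (forall x, D x -> 0 <= f x) -> (forall x, D x -> f x <= g x) ->
  \int[mu]_(x in D) f x <= \int[mu]_(x in D) g x.
Proof.
move=> f0 fg.
have g0 : forall x, D x -> 0 <= g x by move=> x Dx; exact: le_trans (f0 x Dx) (fg x Dx).
rewrite !ge0_integralE//.
apply: ge_ereal_sup => _ [h hf <-]; apply: ereal_sup_ubound; exists h => //= x.
apply: le_trans (hf x) _; rewrite /patch; case: ifPn => //; rewrite inE => /fg //.
Qed.

Lemma int_mono (D : set T) (f g : T -> \bar R) :
  (forall x, D x -> f x <= g x) ->
  \int[mu]_(x in D) f x <= \int[mu]_(x in D) g x.
Proof.
move=> fg; rewrite integralE [X in _ <= X]integralE; apply: leeB.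
  apply: nnint_mono => x Dx.
    by rewrite funeposE le_max lexx orbT.
  by rewrite !funeposE; apply: le_max2 => //; exact: fg.
apply: nnint_mono => x Dx.
  by rewrite funenegE le_max lexx orbT.
by rewrite !funenegE; apply: le_max2 => //; rewrite leeN2; exact: fg.
Qed.

Lemma nnint_scale_le (D : set T) (f : T -> \bar R) (k : R) : (0 < k)%R ->
  (forall x, D x -> 0 <= f x) ->
  k%:E * \int[mu]_(x in D) f x <= \int[mu]_(x in D) (k%:E * f x).
Proof.
move=> k0 f0.
have kf0 : forall x, D x -> 0 <= k%:E * f x.
  by move=> x Dx; apply: mule_ge0; [rewrite lee_fin ltW|exact: f0].
rewrite !ge0_integralE// -ereal_sup_pZl//.
apply: ge_ereal_sup => _ [_ [h hf <-] <-]; apply: ereal_sup_ubound.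
exists (scale_nnsfun h (ltW k0)) => /=.
  move=> x /=; rewrite /patch; case: ifPn => Dx.
    rewrite EFinM; apply: lee_wpmul2l; first by rewrite lee_fin ltW.
    by have := hf x; rewrite /patch Dx.
  have := hf x; rewrite /patch (negbTE Dx) => hx0.
  by rewrite EFinM; apply: mule_ge0_le0; [rewrite lee_fin ltW|].
by rewrite sintegralrM.
Qed.

Lemma nnint_scale (D : set T) (f : T -> \bar R) (k : R) : (0 < k)%R ->
  (forall x, D x -> 0 <= f x) ->
  \int[mu]_(x in D) (k%:E * f x) = k%:E * \int[mu]_(x in D) f x.
Proof.
move=> k0 f0; apply/eqP; rewrite eq_le nnint_scale_le// andbT.
have kf0 : forall x, D x -> 0 <= k%:E * f x.
  by move=> x Dx; apply: mule_ge0; [rewrite lee_fin ltW|exact: f0].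
have ki : (0 < k^-1)%R by rewrite invr_gt0.
have := @nnint_scale_le D (fun x => k%:E * f x) _ ki kf0.
rewrite [X in _ <= X](@eq_integral _ _ _ _ _ f); last first.
  by move=> x _; rewrite muleA -EFinM mulVf ?gt_eqF// mul1e.
move=> H; rewrite -(@lee_pmul2l _ (k^-1)%:E)// ?lte_fin ?invr_gt0//.
by rewrite muleA -EFinM mulVf ?gt_eqF// mul1e.
Qed.

Lemma int_scale (D : set T) (f : T -> \bar R) (k : R) : (0 < k)%R ->
  \int[mu]_(x in D) (k%:E * f x) = k%:E * \int[mu]_(x in D) f x.
Proof.
move=> k0; rewrite integralE [in RHS]integralE.
have kfin : k%:E \is a fin_num by [].
have kge : 0 <= k%:E by rewrite lee_fin ltW.
rewrite (@eq_integral _ _ _ _ _ (fun x => k%:E * f^\+ x)); last first.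
  by move=> x _; rewrite !funeposE maxe_pMr// mule0.
rewrite [X in _ - X](@eq_integral _ _ _ _ _ (fun x => k%:E * f^\- x)); last first.
  by move=> x _; rewrite !funenegE maxe_pMr// mule0 muleN.
rewrite !nnint_scale//; try by move=> x _; rewrite ?funenegE ?funeposE le_max lexx orbT.
have P0 : 0 <= \int[mu]_(x in D) f^\+ x.
  by apply: integral_ge0 => x _; rewrite funeposE le_max lexx orbT.
have N0 : 0 <= \int[mu]_(x in D) f^\- x.
  by apply: integral_ge0 => x _; rewrite funenegE le_max lexx orbT.
have ky : k%:E * +oo = +oo by rewrite muleC gt0_mulye ?lte_fin.
have kNy : k%:E * -oo = -oo by rewrite muleC gt0_mulNye ?lte_fin.
move: P0 N0.
case: (\int[mu]_(x in D) f^\+ x) => [p||] //; case: (\int[mu]_(x in D) f^\- x) => [q||] //.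
- by move=> _ _; rewrite -!EFinM -EFinB mulrBr.
- by move=> _ _; rewrite ky /= ?kNy ?ky.
- by move=> _ _; rewrite ky /= ?kNy ?ky.
- by move=> _ _; rewrite ky /= ?kNy ?ky.
Qed.
End IntLemmas.

Lemma iter_mono (R : realType) (k : nat) (g h : (nat -> R) -> \bar R) :
  (forall x, g x <= h x) -> iter_int k g <= iter_int k h.
Proof.
elim: k g h => [|k IH] g h gh //=.
apply: IH => x; apply: int_mono => t _; exact: gh.
Qed.

Lemma iter_scale (R : realType) (k : nat) (g : (nat -> R) -> \bar R) (c : R) :
  (0 < c)%R -> iter_int k (fun x => c%:E * g x) = c%:E * iter_int k g.
Proof.
move=> c0; elim: k g => [|k IH] g //=.
rewrite -IH; congr iter_int; apply: funext => x; exact: int_scale.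
Qed.

Lemma expi_norm (R : realType) (t : R) : (`|expi t| <= 1)%R.
Proof.
rewrite normc_def /= cos2Dsin2 sqrtr1; exact: lexx.
Qed.

Section Main.
Variables (R : realType) (n m : nat) (D : set (Cn R n))
    (f0 : 'I_m -> Cn R n -> CC R) (phi0 : Cn R n -> \bar R)
    (Phi psi : Cn R n -> \bar R).

Lemma F_ge0 (X : Cn R n -> \bar R) z :
  0 <= weight_f0 f0 phi0 z * expeR (- (2%:E * X z)).
Proof.
apply: mule_ge0; last exact: expeR_ge0.
apply: mule_ge0; last exact: expeR_ge0.
rewrite lee_fin; apply: sumr_ge0 => i _; rewrite /abs2; apply: addr_ge0; exact: sqr_ge0.
Qed.

Lemma key (b : R) : (0 < b)%R -> global_Zhou_weight D f0 phi0 Phi -> neg_psh_on D psi ->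
  (exists r : R, (0 < r)%R /\ exists c : R, forall z, D z ->
      (sqnorm z < r ^+ 2)%R -> psi z <= b%:E * Phi z + c%:E) ->
  forall z, D z -> psi z <= b%:E * Phi z.
Proof.
move=> b0 [[[oD [Phioo [Phiusc [Phismv Phicomp]]]] Phineg] [_ [Phinoint Phimax]]]
  [[_ [psioo [psiusc [psismv psicomp]]]] psineg] [r [r0 [c Hc]]].
pose phit z := if `[< D z >] then maxe (Phi z) ((b^-1)%:E * psi z) else Phi z.
have phitD z : D z -> phit z = maxe (Phi z) ((b^-1)%:E * psi z).
  by move=> Dz; rewrite /phit asboolT.
have phitN z : ~ D z -> phit z = Phi z by move=> Dz; rewrite /phit asboolF.
have phit_ge z : Phi z <= phit z.
  by rewrite /phit; case: ifPn => _; rewrite ?le_max ?lexx.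
have phit_gepsi z : D z -> (b^-1)%:E * psi z <= phit z.
  by move=> Dz; rewrite phitD // le_max lexx orbT.
have binv0 : (0 < b^-1)%R by rewrite invr_gt0.
have psineg' z : D z -> (b^-1)%:E * psi z < 0.
  by move=> Dz; rewrite pmule_rlt0 ?lte_fin // psineg.
have psh : neg_psh_on D phit.
  split; last first.
    by move=> z Dz; rewrite phitD // gt_max Phineg //= psineg'.
  split; first exact: oD.
  split.
    move=> z Dz; rewrite phitD // gt_max Phioo //=.
    exact: lt_le_trans (psineg' z Dz) (leey _).
  split.
    move=> z Dz e; rewrite phitD // gt_max => /andP[h1 h2].
    have h2' : psi z < (b * e)%:E.
      rewrite -(@lte_pmul2l _ (b^-1)%:E) ?lte_fin // EFinM muleA -EFinM mulVf ?gt_eqF //.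
      by rewrite mul1r.
    have nD : nbhs z D by move: oD; rewrite openE => /(_ z Dz).
    have := filterI (filterI (Phiusc z Dz e h1) (psiusc z Dz _ h2')) nD.
    move=> H; have {}H := H (nbhs_filter z) (nbhs_filter z); apply: (@filterS _ _ (nbhs_filter z) _ _ _ H) => w [[w1 w2] Dw].
    rewrite phitD // gt_max w1 /=.
    rewrite -(@lte_pmul2l _ b%:E) ?lte_fin // muleA -EFinM mulfV ?gt_eqF // mul1e.
    by rewrite -EFinM.
  split.
    move=> a v Hdisc.
    have Da : D a.
      have h0 : (`|0 : CC R| <= 1)%R by rewrite normr0 ler01.
      by have := Hdisc 0%R h0; rewrite scale0r addr0.
    have pi0 : 0 <= ((2 * pi)^-1)%:E :> \bar R.
      by rewrite lee_fin invr_ge0 mulr_ge0 ?pi_ge0.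
    rewrite phitD // ge_max; apply/andP; split.
      apply: le_trans (Phismv a v Hdisc) _; apply: lee_wpmul2l => //.
      by apply: int_mono => t _; exact: phit_ge.
    apply: (@le_trans _ _ ((b^-1)%:E * (((2 * pi)^-1)%:E *
      \int[lebesgue_measure]_(t in `[0%R, (2 * pi)%R]) psi (a + expi t *: v)%R))).
      by apply: lee_wpmul2l; [rewrite lee_fin ltW|exact: psismv].
    rewrite muleCA -int_scale //; apply: lee_wpmul2l => //.
    apply: int_mono => t _; apply: phit_gepsi; apply: Hdisc; exact: expi_norm.
  move=> z Dz; have [w [cw hw]] := Phicomp z Dz; exists w; split => //.
  apply: contra hw => /eqP hw'; have := phit_ge w; rewrite hw' leeNy_eq //.
have nonint : ~ integrable_near_o
    (fun z => weight_f0 f0 phi0 z * expeR (- (2%:E * phit z))).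
  move=> [r' [r'0 Hr']]; apply: Phinoint.
  pose c' := (b^-1 * Num.max c 0)%R.
  have c'0 : (0 <= c')%R by rewrite mulr_ge0 ?le_max ?lexx ?orbT // ltW.
  pose K := expR (2 * c').
  have K1 : (1 <= K)%R by rewrite /K -expR0 ler_expR mulr_ge0.
  have K0 : (0 < K)%R by exact: expR_gt0.
  have pw : forall z,
      (if (sqnorm z < (Num.min r r') ^+ 2)%R then
         weight_f0 f0 phi0 z * expeR (- (2%:E * Phi z)) else 0) <=
      K%:E * (if (sqnorm z < r' ^+ 2)%R then
         weight_f0 f0 phi0 z * expeR (- (2%:E * phit z)) else 0).
    move=> z; case: ifPn => hz; last first.
      by apply: mule_ge0; [rewrite lee_fin ltW|case: ifPn => _; [exact: F_ge0|]].
    have mr : (0 <= Num.min r r')%R by rewrite le_min ?ltW.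
    have hzr : (sqnorm z < r ^+ 2)%R.
      apply: lt_le_trans hz _; rewrite !expr2; apply: ler_pM => //.
        by rewrite ge_min lexx.
      by rewrite ge_min lexx.
    have hzr' : (sqnorm z < r' ^+ 2)%R.
      apply: lt_le_trans hz _; rewrite !expr2; apply: ler_pM => //.
        by rewrite ge_min lexx orbT.
      by rewrite ge_min lexx orbT.
    rewrite hzr'.
    have Kge : forall X, 0 <= X -> X <= K%:E * X.
      by move=> X X0; apply: lee_pemull => //; rewrite lee_fin.
    case: (pselect (D z)) => Dz; last by rewrite phitN //; apply: Kge; exact: F_ge0.
    rewrite phitD // muleCA; apply: lee_wpmul2l.
      apply: mule_ge0; last exact: expeR_ge0.
      rewrite lee_fin; apply: sumr_ge0 => i _; rewrite /abs2; apply: addr_ge0; exact: sqr_ge0.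
    have hb := Hc z Dz hzr.
    have PhiN := Phineg z Dz; have psiN := psineg z Dz.
    move: hb PhiN psiN; case: (Phi z) => [x||]; case: (psi z) => [y||] //= hb PhiN psiN.
    all: try by move: PhiN psiN; rewrite ?ltNge ?leey.
    - have bxc : (y <= b * x + c)%R by move: hb; rewrite -EFinM -EFinD lee_fin.
      have hy : (b^-1 * y <= x + c')%R.
        have := ler_wpM2l (ltW binv0) bxc; rewrite mulrDr mulrA mulVf ?gt_eqF // mul1r => h.
        apply: le_trans h _; rewrite lerD2l /c'; apply: ler_wpM2l; first exact: ltW.
        by rewrite le_max lexx.
      rewrite -EFinM maxEle lee_fin; case: ifPn => _ /=;
        rewrite -EFinM lee_fin -expRD ler_expR;
        move: hy c'0; clearbody c'; set t := (b^-1 * y)%R => hy c'0; lra.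


    - rewrite (muleC _ -oo) gt0_mulNye ?lte_fin // maxeNy /=.
      by apply: Kge; rewrite lee_fin expR_ge0.
    - by move: hb; rewrite (muleC _ -oo) gt0_mulNye ?lte_fin.
    - rewrite (muleC (b^-1)%:E -oo) gt0_mulNye ?lte_fin // maxxx.
      by apply: Kge; exact: expeR_ge0.
  exists (Num.min r r'); split; first by rewrite lt_min r0 r'0.
  apply: (@le_lt_trans _ _ (K%:E * int_Cn (fun z => if (sqnorm z < r' ^+ 2)%R then
         weight_f0 f0 phi0 z * expeR (- (2%:E * phit z)) else 0))).
    rewrite /int_Cn -iter_scale //; apply: iter_mono => x; exact: pw.
  move: Hr'; case: (int_Cn _) => [x||] //= _.
    by rewrite -EFinM ltry.
  by rewrite muleC gt0_mulNye ?lte_fin.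
have Heq := Phimax phit psh (fun z _ => phit_ge z) nonint.
move=> z Dz; have := phit_gepsi z Dz; rewrite Heq // => h.
rewrite -(@lee_pmul2l _ (b^-1)%:E) ?lte_fin // muleA -EFinM mulVf ?gt_eqF // mul1e //.
Qed.
End Main.

Local Close Scope ereal_scope.

Theorem lemma8p9 (R : realType) (n m : nat) (D : set (Cn R n))
    (f0 : 'I_m -> Cn R n -> CC R) (phi0 : Cn R n -> \bar R)
    (Phi psi : Cn R n -> \bar R) :
  (0 < n)%N ->
  domain_with_o D ->
  (exists U : set (Cn R n), open U /\ U 0 /\
     (forall j, holomorphic_on U (f0 j)) /\ psh_on U phi0) ->
  integrable_near_o (weight_f0 f0 phi0) ->
  global_Zhou_weight D f0 phi0 Phi ->
  neg_psh_on D psi ->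
  forall z, D z -> (psi z <= sigma_rel D psi Phi * Phi z)%E.
Proof.
Local Open Scope ereal_scope.
move=> _ _ _ _ HZ Hpsi z Dz.
have psineg := Hpsi.2 z Dz.
have PhiN := HZ.1.2 z Dz.
rewrite /sigma_rel.
set E := [set b : R | _].
have HE : forall b, E b -> psi z <= b%:E * Phi z.
  move=> b [b0 Hb]; move: b0; rewrite le_eqVlt => /predU1P[<-|b0].
    by rewrite mul0e ltW.
  exact: key b0 HZ Hpsi Hb z Dz.
have E0 : E 0%R.
  split => //; exists 1%R; split => //; exists 0%R => w Dw _.
  by rewrite mul0e add0e; exact: ltW (Hpsi.2 w Dw).
set sup := ereal_sup _.
have sup0 : 0 <= sup by apply: ereal_sup_ubound; exists 0%R.
move: psineg PhiN HE sup0; case: (psi z) => [y||] //; last by move=> *; rewrite leNye.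
  move=> yN; case: (Phi z) => [x||] // xN HE sup0.
  - have ub : sup <= (y / x)%:E.
      apply: ge_ereal_sup => _ [b Eb <-]; rewrite lee_fin ler_ndivlMr //.
      by have := HE b Eb; rewrite -EFinM lee_fin.
    move: ub sup0; case: sup => [s||] // hs _.
    rewrite -EFinM lee_fin; move: hs; rewrite lee_fin => hs.
    have := ler_wnM2r (ltW xN) hs; rewrite divfK // lt_eqF //.
  - have [sle|sgt] := leP sup 0.
      have -> : sup = 0 by apply/eqP; rewrite eq_le sle sup0.
      by rewrite mul0e ltW.
    have [_ [b Eb <-] bgt] := ereal_sup_gt sgt.
    have := HE b Eb; rewrite (muleC b%:E -oo) gt0_mulNye //.

Qed.
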